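(* Let $(\Omega,\mathcal{F},\mathbb{P})$ be a nonatomic probability space and let $\mathbb{Q}$ be a probability measure absolutely continuous with respect to $\mathbb{P}$. For $1\le r\le\infty$ with $\frac{d\mathbb{Q}}{d\mathbb{P}}\in L^{r'}$ define $\rho_{\mathbb{Q},r}:L^r\to\mathbb{R}\cup\{\infty\}$ by $\rho_{\mathbb{Q},r}(X)=\sup\{\mathbb{E}[-XY]:Y\sim\frac{d\mathbb{Q}}{d\mathbb{P}}\}$. Let $1\le p<\infty$. (i) If $\frac{d\mathbb{Q}}{d\mathbb{P}}\in L^{p'}$, then $\rho_{\mathbb{Q},\infty}$ admits a unique finite-valued, continuous extension to $L^p$, given by $\rho_{\mathbb{Q},p}$. (ii) If $\frac{d\mathbb{Q}}{d\mathbb{P}}\notin L^{p'}$, then $\rho_{\mathbb{Q},\infty}$ admits no finite-valued, continuous extension to $L^p$.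
   Context: $p'$ denotes the conjugate exponent of $p$, i.e. $\frac1p+\frac1{p'}=1$ (with $1'=\infty$, $\infty'=1$). $Y\sim Z$ means equality in law under $\mathbb{P}$. An extension of $\rho_{\mathbb{Q},\infty}$ to $L^p$ is a map on $L^p$ whose restriction to $L^\infty$ equals $\rho_{\mathbb{Q},\infty}$. *)

(* Defs.v *)
From HB Require Import structures.
From mathcomp Require Import all_boot all_order all_algebra.
From mathcomp Require Import all_classical all_reals all_analysis.
Set Implicit Arguments. Unset Strict Implicit. Unset Printing Implicit Defensive.
Import Order.TTheory GRing.Theory Num.Theory.
Local Open Scope classical_set_scope.
Local Open Scope ring_scope.

Section Defs.
Context {d : measure_display} {T : measurableType d} {R : realType}.

Definition nonatomic (P : {measure set T -> \bar R}) : Prop :=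
  forall A, measurable A -> (0 < P A)%E ->
    exists B, [/\ measurable B, B `<=` A, (0 < P B)%E & (P B < P A)%E].

Definition abs_cont (Q P : {measure set T -> \bar R}) : Prop :=
  forall A, measurable A -> P A = 0%E -> Q A = 0%E.

Definition is_density (Q P : {measure set T -> \bar R}) (D : T -> R) : Prop :=
  [/\ measurable_fun setT D, (forall x, 0 <= D x) &
      forall A, measurable A -> Q A = (\int[P]_(x in A) (D x)%:E)%E].

Definition conj_exp (p : R) : \bar R :=
  if p == 1 then +oo%E else (p / (p - 1))%:E.

Definition inLp (P : {measure set T -> \bar R}) (p : \bar R) (X : T -> R) : Prop :=
  measurable_fun setT X /\ (Lnorm P p (EFin \o X) < +oo)%E.

Definition law_eq (P : {measure set T -> \bar R}) (Y Z : T -> R) : Prop :=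
  forall B : set R, measurable B -> P (Y @^-1` B) = P (Z @^-1` B).

(* rho_Q(X) = sup { E[-XY] : Y ~ dQ/dP } (the domain L^r is imposed by the
   quantification where rho is used) *)
Definition rhoQ (P : {measure set T -> \bar R}) (D : T -> R) (X : T -> R) : \bar R :=
  ereal_sup [set (\int[P]_x (- (X x * Y x))%:E)%E |
             Y in [set Y | measurable_fun setT Y /\ law_eq P Y D]].

Definition Lp_continuous (P : {measure set T -> \bar R}) (p : \bar R)
    (F : (T -> R) -> R) : Prop :=
  forall X, inLp P p X -> forall e : R, 0 < e -> exists2 del : R, 0 < del &
    forall Z, inLp P p Z -> (Lnorm P p (fun x => (X x - Z x)%:E) < del%:E)%E ->
      `|F X - F Z| < e.

Definition extends_rho_inf (P : {measure set T -> \bar R}) (D : T -> R)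
    (F : (T -> R) -> R) : Prop :=
  forall X, inLp P +oo%E X -> (F X)%:E = rhoQ P D X.

End Defs.

(* Main.v *)
Require Import Defs.
From HB Require Import structures.
From mathcomp Require Import all_boot all_order all_algebra.
From mathcomp Require Import all_classical all_reals all_analysis.
From mathcomp Require Import measurable_realfun ess_sup_inf ring lra.
Import Order.TTheory GRing.Theory Num.Theory.
Local Open Scope classical_set_scope.
Local Open Scope ring_scope.

Section S.
Context d (T : measurableType d) (R : realType) (P : probability T R) (D : T -> R).
Hypothesis mD : measurable_fun setT D.
Local Open Scope ereal_scope.

Lemma law_integral (Y : T -> R) (g : R -> R) :
  measurable_fun setT Y -> law_eq P Y D -> measurable_fun [set: R] g ->
  (forall r, (0 <= g r)%R) -> \int[P]_x (g (Y x))%:E = \int[P]_x (g (D x))%:E.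
Proof.
move=> mY YD mg g0.
have mg' : measurable_fun [set: R] (EFin \o g) by exact/measurable_EFinP.
have := @ge0_integral_pushforward _ _ T R R Y mY P setT (EFin \o g) measurableT mg' (fun r _ => g0 r).
have := @ge0_integral_pushforward _ _ T R R D mD P setT (EFin \o g) measurableT mg' (fun r _ => g0 r).
rewrite !preimage_setT => <- <-.
apply: eq_measure_integral => A mA _.
rewrite /pushforward /=; exact: YD.
Qed.
End S.
Section S2.
Context d (T : measurableType d) (R : realType) (P : probability T R) (D : T -> R).
Hypothesis mD : measurable_fun setT D.
Local Open Scope ereal_scope.

Lemma law_preimage (Y : T -> R) (h : R -> \bar R) (A : set (\bar R)) :
  law_eq P Y D -> measurable_fun setT h -> measurable A ->
  P ((h \o Y) @^-1` A) = P ((h \o D) @^-1` A).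
Proof.
move=> YD mh mA.
have -> : (h \o Y) @^-1` A = Y @^-1` (h @^-1` A) by [].
have -> : (h \o D) @^-1` A = D @^-1` (h @^-1` A) by [].
apply: YD.
have := mh measurableT _ mA. by rewrite setTI.
Qed.
Lemma law_Lnorm (Y : T -> R) (q : \bar R) : q != -oo ->
  measurable_fun setT Y -> law_eq P Y D ->
  Lnorm P q (EFin \o Y) = Lnorm P q (EFin \o D).
Proof.
move=> qNy mY YD; rewrite unlock; case: q qNy => [r| |//] _.
- congr (_ `^ _).
  have mg : measurable_fun [set: R] (fun x : R => `|x| `^ r)%R.
    have h1 := measurable_powR r.
    have h2 : measurable_fun [set: R] (@Num.Def.normr _ R) by exact: normr_measurable.
    have := measurableT_comp h1 h2.
    exact.
  transitivity (\int[P]_x ((fun x : R => `|x| `^ r)%R (Y x))%:E).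
    by apply: eq_integral => x _.
  rewrite (@law_integral _ _ _ P D mD Y _ mY YD mg); last by move=> z; exact: powR_ge0.
  by apply: eq_integral => x _.
- case: ifPn => // _.
  have mh : measurable_fun [set: R] (fun x : R => `|x%:E|).
    have h1 : measurable_fun [set: \bar R] (@abse R) by exact: abse_measurable.
    have h2 : measurable_fun [set: R] (@EFin R) by exact: EFin_measurable.
    exact: (measurableT_comp h1 h2).
  have mY' : measurable_fun [set: T] (abse \o (EFin \o Y)).
    exact: (measurableT_comp mh mY).
  have mD' : measurable_fun [set: T] (abse \o (EFin \o D)).
    exact: (measurableT_comp mh mD).
  rewrite (ess_supEmu0 _ mY') (ess_supEmu0 _ mD').
  congr ereal_inf; apply/funext => y; apply/propext.
  have my : measurable (`]y, +oo[%classic : set (\bar R)) by exact: emeasurable_itv.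
  have := @law_preimage Y (fun x : R => `|x%:E|) _ YD mh my.
  move=> h.
  have e : P ((abse \o (EFin \o Y)) @^-1` `]y,+oo[) =
           P ((abse \o (EFin \o D)) @^-1` `]y,+oo[) := h.
  by rewrite /= e.
Qed.
End S2.

Set Implicit Arguments. Unset Strict Implicit.
Section Main.
Context d (T : measurableType d) (R : realType) (P : probability T R) (D : T -> R) (p : R).
Hypothesis mD : measurable_fun setT D.
Hypothesis D0 : forall x, 0 <= D x.
Hypothesis p1 : 1 <= p.
Local Open Scope ereal_scope.

Let N := Lnorm P (conj_exp p) (EFin \o D).

Lemma holder_law (X Y : T -> R) : measurable_fun setT X -> measurable_fun setT Y ->
  law_eq P Y D -> N < +oo ->
  \int[P]_x (`|X x * Y x|)%:E <= Lnorm P p%:E (EFin \o X) * N.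
Proof.
move=> mX mY YD Nfin.
have cNy : conj_exp p != -oo by rewrite /conj_exp; case: ifPn.
rewrite /N -(@law_Lnorm _ _ _ P D mD Y _ cNy mY YD) in Nfin *.
have mXY : measurable_fun setT (fun x => X x * Y x)%R by exact: measurable_funM.
rewrite /conj_exp in Nfin *; case: ifPn Nfin => [/eqP pE|pn1] Nfin.
- subst p.
  rewrite Lnorm1.
  have MY : Lnorm P +oo (EFin \o Y) = ess_sup P (abse \o (EFin \o Y)).
    rewrite unlock ifT //.
    by have h := probability_setT P; rewrite [X in _ < X]h lte01.
  have M0 := Lnorm_ge0 P +oo (EFin \o Y).
  set M := Lnorm P +oo (EFin \o Y) in Nfin M0 MY *.
  have Mfin : M \is a fin_num by rewrite ge0_fin_numE.
  have ae1 := ess_sup_ge P (abse \o (EFin \o Y)).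
  rewrite -MY -(fineK Mfin) in ae1 *.
  apply: (@le_trans _ _ (\int[P]_x ((`|X x|)%:E * (fine M)%:E))).
    apply: ae_ge0_le_integral => //.
    - apply/measurable_EFinP; exact: measurableT_comp.
    - by move=> x _; rewrite mule_ge0 // lee_fin fine_ge0.
    - apply: emeasurable_funM; last exact: measurable_cst.
      apply/measurable_EFinP; exact: measurableT_comp.
    - apply: filterS ae1 => x /= h _.
      by rewrite normrM EFinM lee_wpmul2l // -abse_EFin.
  rewrite ge0_integralZr //.
  + apply/measurable_EFinP; exact: measurableT_comp.
  + by rewrite lee_fin fine_ge0.
- have pg1 : (1 < p)%R by rewrite lt_neqAle eq_sym pn1 p1.
  have p0 : (0 < p)%R by exact: (lt_trans ltr01 pg1).
  have pm0 : (0 < p - 1)%R by rewrite subr_gt0.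
  have q0 : (0 < p / (p - 1))%R by exact: divr_gt0.
  have pq : (p^-1 + (p / (p - 1))^-1 = 1)%R.
    rewrite invf_div; field.
    by rewrite gt_eqF.
  have h := @hoelder _ _ _ P X Y p (p / (p - 1)) mX mY p0 q0 pq.
  rewrite Lnorm1 in h.
  apply: (le_trans _ h).
  rewrite le_eqVlt; apply/orP; left; apply/eqP; by apply: eq_integral => x _ /=.
Qed.

Hypothesis Nfin : N < +oo.

Lemma N_fin : N \is a fin_num.
Proof. by rewrite ge0_fin_numE // /N Lnorm_ge0. Qed.

Lemma inLp_fin X : inLp P p%:E X -> Lnorm P p%:E (EFin \o X) \is a fin_num.
Proof. by case=> _ h; rewrite ge0_fin_numE // Lnorm_ge0. Qed.

Lemma integrable_XY (X Y : T -> R) : inLp P p%:E X -> measurable_fun setT Y ->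
  law_eq P Y D -> P.-integrable setT (fun x => (X x * Y x)%:E).
Proof.
move=> [mX Xfin] mY YD.
have mXY : measurable_fun setT (fun x => X x * Y x)%R by exact: measurable_funM.
apply/integrableP; split; first exact/measurable_EFinP.
under eq_integral do rewrite abse_EFin.
apply: (le_lt_trans (holder_law mX mY YD Nfin)).
apply: lte_mul_pinfty => //; first exact: Lnorm_ge0.
by rewrite ge0_fin_numE // Lnorm_ge0.
Qed.

Lemma integrable_NXY (X Y : T -> R) : inLp P p%:E X -> measurable_fun setT Y ->
  law_eq P Y D -> P.-integrable setT (fun x => (- (X x * Y x))%:E).
Proof.
move=> hX mY YD; have := integrable_XY hX mY YD.
move/integrableP => [m1 f1]; apply/integrableP; split.
  by apply/measurable_EFinP; apply: measurableT_comp => //; exact/measurable_EFinP.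
by under eq_integral do rewrite abse_EFin normrN -abse_EFin.
Qed.

Lemma rho_ub X : inLp P p%:E X -> rhoQ P D X <= Lnorm P p%:E (EFin \o X) * N.
Proof.
move=> hX; apply: ge_ereal_sup => _ [Y [mY YD] <-].
apply: le_trans; first exact: lee_abs.
apply: le_trans; first by apply: le_abse_integral => //; apply/measurable_EFinP;
  apply: measurableT_comp => //; apply: measurable_funM => //; case: hX.
apply: le_trans (holder_law _ mY YD Nfin); last by case: hX.
by rewrite le_eqVlt; apply/orP; left; apply/eqP; apply: eq_integral => x _ /=; rewrite normrN.
Qed.

Lemma rho_lb X : inLp P p%:E X -> \int[P]_x (- (X x * D x))%:E <= rhoQ P D X.
Proof.
by move=> hX; apply: ereal_sup_ubound; exists D.
Qed.

Lemma rho_fin X : inLp P p%:E X -> rhoQ P D X \is a fin_num.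
Proof.
move=> hX; rewrite fin_numE; apply/andP; split.
  have h1 := rho_lb hX.
  have : \int[P]_x (- (X x * D x))%:E \is a fin_num.
    apply: integrable_fin_num => //; by apply: integrable_NXY.
  move=> fin; rewrite -ltNye; apply: (lt_le_trans _ h1).
  by move: fin; rewrite fin_numE ltNye => /andP[].
apply/negP => /eqP h; have := rho_ub hX; rewrite h leye_eq => /eqP.
move=> h'; have : (Lnorm P p%:E (EFin \o X) * N) \is a fin_num.
  by rewrite fin_numM // ?inLp_fin // N_fin.
by rewrite h'.
Qed.

Lemma rho_diff X Z : inLp P p%:E X -> inLp P p%:E Z ->
  rhoQ P D X <= rhoQ P D Z + Lnorm P p%:E (fun x => (Z x - X x)%:E) * N.
Proof.
move=> hX hZ; apply: ge_ereal_sup => _ [Y [mY YD] <-].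
have ia := integrable_NXY hX mY YD.
have ib := integrable_NXY hZ mY YD.
have fb := integrable_fin_num measurableT ib.
set a := \int[P]_x _ in ia *.
set b := \int[P]_x _ in ib fb *.
have hb : b <= rhoQ P D Z by apply: ereal_sup_ubound; exists Y.
have mZX : measurable_fun setT (fun x => Z x - X x)%R.
  by apply: measurable_funB; [case: hZ | case: hX].
have hab : a - b <= Lnorm P p%:E (fun x => (Z x - X x)%:E) * N.
  rewrite /a /b -integralB //.
  apply: le_trans; first exact: lee_abs.
  apply: le_trans.
    apply: le_abse_integral => //; apply: emeasurable_funB.
      by case/integrableP: ia.
    by case/integrableP: ib.
  apply: le_trans (holder_law mZX mY YD Nfin).
  rewrite le_eqVlt; apply/orP; left; apply/eqP; apply: eq_integral => x _ /=.
  by do 2 f_equal; ring.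
rewrite -(subeK a fb) addeC.
by apply: leeD.
Qed.

Lemma Lnorm_symB (q : \bar R) X Z : Lnorm P q (fun x => (X x - Z x)%:E) =
  Lnorm P q (fun x => (Z x - X x)%:E).
Proof.
rewrite -oppe_Lnorm; apply: eq_Lnorm => x /=.
by rewrite opprB.
Qed.

Lemma F_cont : Lp_continuous P p%:E (fun X => fine (rhoQ P D X)).
Proof.
move=> X hX e e0.
have c0 : (0 <= fine N)%R by rewrite fine_ge0 // /N Lnorm_ge0.
set c := fine N in c0.
have c1 : (0 < c + 1)%R by lra.
exists (e / (c + 1))%R; first exact: divr_gt0.
move=> Z hZ hlt.
have L0 := Lnorm_ge0 P p%:E (fun x => (X x - Z x)%:E).
set L := Lnorm P p%:E (fun x => (X x - Z x)%:E) in L0 hlt.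
have Lfin : L \is a fin_num by rewrite ge0_fin_numE // (lt_trans hlt) // ltry.
have h1 := rho_diff hX hZ.
have h2 := rho_diff hZ hX.
rewrite -Lnorm_symB -/L in h1.
rewrite -/L in h2.
have fX := rho_fin hX.
have fZ := rho_fin hZ.
rewrite -(fineK fX) -(fineK fZ) -(fineK Lfin) -(fineK N_fin) -EFinM -EFinD lee_fin in h1.
rewrite -(fineK fX) -(fineK fZ) -(fineK Lfin) -(fineK N_fin) -EFinM -EFinD lee_fin in h2.
rewrite -(fineK Lfin) lte_fin in hlt.
have l0 : (0 <= fine L)%R by rewrite fine_ge0.
have hlc : (fine L * c < e)%R.
  apply: (@le_lt_trans _ _ (e / (c + 1) * c)%R).
    by apply: ler_wpM2r => //; exact: ltW.
  rewrite mulrAC ltr_pdivrMr // ltr_pM2l //; lra.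
rewrite -/c in h1 h2.
set lc := (fine L * c)%R in hlc h1 h2.
rewrite ltr_norml; apply/andP; split; lra.
Qed.

Lemma inLp_infty X : inLp P +oo X -> inLp P p%:E X.
Proof.
move=> [mX hX].
have hX' : X \in Lfun P +oo.
  rewrite inE; apply/andP; split; rewrite inE //=.
have p1' : (1 <= p%:E)%E by rewrite lee_fin.
have Pfin : P [set: T] \is a fin_num.
  by have h := probability_setT P; rewrite [X in X \is a fin_num]h.
have := @Lfun_subset _ _ _ P p%:E +oo p1' (leey _) Pfin (leey _) X hX'.
rewrite inE => /andP[_]; rewrite inE /= => h; split => //.
Qed.
End Main.

Section Dens.
Context d (T : measurableType d) (R : realType) (P : probability T R) (p : R).
Hypothesis p1 : 1 <= p.
Local Open Scope ereal_scope.

Lemma inLp_Lfun X : inLp P p%:E X -> X \in Lfun P p%:E.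
Proof. by move=> [mX hX]; rewrite inE; apply/andP; split; rewrite inE. Qed.

Lemma density X : inLp P p%:E X -> forall e : R, (0 < e)%R ->
  exists W, inLp P +oo W /\ Lnorm P p%:E (fun x => (X x - W x)%:E) < e%:E.
Proof.
move=> hX e e0; have [mX _] := hX.
have p0 : (0 < p)%R by exact: (lt_le_trans ltr01 p1).
pose A (n : nat) := (fun x => `|X x|)%R @^-1` `]-oo, n%:R]%classic.
have mA n : measurable (A n).
  have mnX : measurable_fun setT (fun x => `|X x|)%R by exact: measurableT_comp.
  have := mnX measurableT _ (@measurable_itv _ `]-oo, n%:R]).
  by rewrite setTI.
have inA n x : (x \in A n) = (`|X x| <= n%:R)%R.
  by apply/idP/idP => [/set_mem|h]; [rewrite /A /= in_itv|apply/mem_set; rewrite /A /= in_itv].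
pose W (n : nat) x := (X x * \1_(A n) x)%R.
have mW n : measurable_fun setT (W n) by apply: measurable_funM => //; exact: measurable_indic.
have WB n x : (`|W n x| <= n%:R)%R.
  rewrite /W indicE; case: (boolP (x \in A n)) => [|_]; rewrite ?mulr1 ?mulr0 ?inA //.
  by rewrite normr0.
have XW n x : (`|X x - W n x| <= `|X x|)%R.
  rewrite /W indicE; case: (boolP (x \in A n)) => _; rewrite ?mulr1 ?mulr0 ?subrr ?subr0 //.
  by rewrite normr0.
pose f_ (n : nat) x := (`|X x - W n x| `^ p)%:E.
pose g x := (`|X x| `^ p)%:E.
have mf_ n : measurable_fun setT (f_ n).
  apply/measurable_EFinP.
  have h1 := measurable_powR p.
  have h2 : measurable_fun setT (fun x => `|X x - W n x|)%R.
    by apply: measurableT_comp => //; exact: measurable_funB.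
  exact: (measurableT_comp h1 h2).
have mf : measurable_fun setT (cst 0 : T -> \bar R) by exact: measurable_cst.
have ig : P.-integrable setT g by exact: Lfun_integrable p1 (inLp_Lfun hX).
have f_f : {ae P, forall x, setT x -> f_ ^~ x @ \oo --> (cst 0 : T -> \bar R) x}.
  apply: aeW => x _; apply: cvg_near_cst.
  exists (Num.Def.archi_bound `|X x|)%R => // n /= hn.
  rewrite /f_ /W indicE.
  have : x \in A n.
    rewrite inA; apply: (le_trans (ltW (archi_boundP (normr_ge0 _)))).
    by rewrite ler_nat.
  by move=> ->; rewrite mulr1 subrr normr0 powR0 // gt_eqF.
have f_g : {ae P, forall x n, setT x -> `|f_ n x| <= g x}.
  apply: aeW => x n _; rewrite /f_ /g gee0_abs ?lee_fin ?powR_ge0 //.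
  by apply: ge0_ler_powR; rewrite ?nnegrE ?XW ?(ltW p0).
have [_ h2 _] := @dominated_convergence _ _ _ P setT measurableT f_ (cst 0) g mf_ mf f_f ig f_g.
have ep0 : (0 < e `^ p)%R by rewrite powR_gt0.
move/fine_cvgP: h2 => [h2fin h2].
have h3 := @cvgr_lt R nat \oo _ _ 0%R h2 (e `^ p)%R ep0.
have h4 := h3 eventually_filter.
have [N0 _ HN] := filterI h2fin h4.
have [fin hlt] := HN N0 (leqnn N0).
exists (W N0); split.
  split; first exact: mW.
  rewrite unlock; case: ifPn => _; last exact: ltry.
  apply: (@le_lt_trans _ _ (N0%:R)%:E); last exact: ltry.
  by apply/ess_supP; apply: aeW => x /=; rewrite lee_fin; exact: WB.
have -> : Lnorm P p%:E (fun x => (X x - W N0 x)%:E) =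
    (\int[P]_x `|f_ N0 x - cst 0 x|) `^ p^-1.
  rewrite unlock; congr (_ `^ _); apply: eq_integral => x _.
  by rewrite /f_ /= subr0 (ger0_norm (powR_ge0 _ _)).
move: fin hlt => /=; set I := \int[P]_x _ => fin hlt.
rewrite -(fineK fin) poweR_EFin lte_fin.
rewrite -[X in (_ < X)%R](@powRr1 _ e) ?(ltW e0) // -(@mulfV _ p) ?gt_eqF //.
rewrite powRrM; apply: gt0_ltr_powR; rewrite ?invr_gt0 ?nnegrE ?fine_ge0 ?powR_ge0 //.
by rewrite /I integral_ge0 // => x _; exact: abse_ge0.
Qed.
End Dens.

Section Counter.
Context d (T : measurableType d) (R : realType) (P : probability T R) (D : T -> R).
Hypothesis mD : measurable_fun setT D.
Hypothesis D0 : forall x, 0 <= D x.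
Local Open Scope ereal_scope.

Lemma PsetT : P [set: T] = 1.
Proof. exact: probability_setT. Qed.

Lemma counter1 : Lnorm P +oo (EFin \o D) = +oo -> forall del : R, (0 < del)%R ->
  exists Z, [/\ inLp P +oo Z, Lnorm P 1 (fun x => (0 - Z x)%:E) < del%:E &
    1 <= \int[P]_x (- (Z x * D x))%:E].
Proof.
move=> Dinf del del0.
set M := (del^-1 + 1)%R.
have M0 : (0 < M)%R by rewrite /M; have := invr_gt0 del; rewrite del0 => h; lra.
set f := abse \o (EFin \o D).
have mf : measurable_fun setT f by apply: measurableT_comp => //; exact: measurableT_comp.
set A := f @^-1` `]M%:E, +oo[.
have mA : measurable A by rewrite -(setTI A); apply: mf => //; exact: emeasurable_itv.
have inA x : (x \in A) = (M < D x)%R.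
  apply/idP/idP => [/set_mem|h]; last by apply/mem_set; rewrite /A /f /= in_itv /= andbT lte_fin ger0_norm.
  by rewrite /A /f /= in_itv /= andbT lte_fin ger0_norm.
have PA0 : 0 < P A.
  rewrite lt0e measure_ge0 andbT; apply/negP => /eqP PA.
  have : ess_sup P f <= M%:E by apply/ess_supP; exact/(ae_le_measureP P M%:E mf).
  move: Dinf; rewrite unlock; case: ifPn => _; last by move=> h; have := @lt0y R; rewrite h ltxx.
  by rewrite -/f => ->; rewrite leye_eq.
have PA1 : P A <= 1 by rewrite -PsetT; apply: le_measure => //; rewrite inE.
have PAfin : P A \is a fin_num by rewrite ge0_fin_numE ?(le_lt_trans PA1) ?ltry // ltW.
set a := fine (P A).
have a0 : (0 < a)%R by rewrite /a fine_gt0 // PA0 (le_lt_trans PA1) // ltry.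
set c := ((M * a)^-1)%R.
have c0 : (0 < c)%R by rewrite invr_gt0 mulr_gt0.
have hPA : \int[P]_x (\1_A x)%:E = a%:E.
  rewrite integral_indic // setIT; apply/esym; exact: (fineK PAfin).
exists (fun x => - (c * \1_A x))%R; split.
- split.
    apply: measurable_funN; apply: measurable_funM => //; exact: measurable_indic.
  rewrite unlock; case: ifPn => _; last exact: ltry.
  apply: (@le_lt_trans _ _ c%:E); last exact: ltry.
  apply/ess_supP; apply: aeW => x /=; rewrite lee_fin normrN normrM indicE.
  by case: (x \in A); rewrite ?normr1 ?normr0 ?mulr1 ?mulr0 ?(ger0_norm (ltW c0)) // ltW.
- rewrite Lnorm1.
  apply: (@le_lt_trans _ _ (\int[P]_x (c%:E * (\1_A x)%:E))).
    rewrite le_eqVlt; apply/orP; left; apply/eqP; apply: eq_integral => x _; rewrite /= sub0r opprK -EFinM ger0_norm //.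
    by apply: mulr_ge0; [exact: ltW | rewrite indicE; case: (x \in A)].
  rewrite ge0_integralZl //; try (by apply/measurable_EFinP; exact: measurable_indic);
    try (by rewrite lee_fin ?mulr_ge0 // ltW); try (by move=> x _; rewrite lee_fin indicE; case: (x \in A)).
  rewrite hPA -EFinM lte_fin.
  have -> : (c * a = M^-1)%R.
    by rewrite /c; field; rewrite !gt_eqF.
  by rewrite invf_plt ?posrE // /M ltrDl ltr01.
- apply: (@le_trans _ _ (\int[P]_x ((c * M)%:E * (\1_A x)%:E))).
    rewrite ge0_integralZl //; try (by apply/measurable_EFinP; exact: measurable_indic);
      try (by rewrite lee_fin ?mulr_ge0 // ltW); try (by move=> x _; rewrite lee_fin indicE; case: (x \in A)).
    rewrite hPA -EFinM.
    by rewrite le_eqVlt; apply/orP; left; apply/eqP; congr (_%:E); rewrite /c; field; rewrite !gt_eqF.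
  apply: ge0_le_integral => //.
  + by move=> x _; rewrite -EFinM lee_fin indicE; case: (x \in A); rewrite ?mulr1 ?mulr0 // mulr_ge0 // ltW.
  + apply: emeasurable_funM; first exact: measurable_cst.
    by apply/measurable_EFinP; exact: measurable_indic.
  + apply/measurable_EFinP; apply: measurable_funN; apply: measurable_funM => //.
    apply: measurable_funN; apply: measurable_funM => //; exact: measurable_indic.
  + move=> x _; rewrite -EFinM lee_fin indicE mulNr opprK.
    case: (boolP (x \in A)); rewrite ?mulr1 ?mulr0 ?mul0r // inA => h.
    by rewrite ler_pM2l // ltW.
Qed.

Lemma counterq (p : R) : (1 < p)%R -> Lnorm P (p / (p - 1))%:E (EFin \o D) = +oo ->
  forall del : R, (0 < del)%R ->
  exists Z, [/\ inLp P +oo Z, Lnorm P p%:E (fun x => (0 - Z x)%:E) < del%:E &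
    1 <= \int[P]_x (- (Z x * D x))%:E].
Proof.
move=> pg1 Dinf del del0.
have p0 : (0 < p)%R by exact: (lt_trans ltr01 pg1).
have pm0 : (0 < p - 1)%R by rewrite subr_gt0.
set q := (p / (p - 1))%R in Dinf.
have q0 : (0 < q)%R by exact: divr_gt0.
have qm1 : (q - 1 = (p - 1)^-1)%R by rewrite /q; field; rewrite gt_eqF.
have qm10 : (0 < q - 1)%R by rewrite qm1 invr_gt0.
have qp : ((q - 1) * p = q)%R by rewrite qm1 /q; field; rewrite gt_eqF.
have Iinf : \int[P]_x ((D x) `^ q)%:E = +oo.
  apply/eqP; rewrite eq_le leey /= leNgt; apply/negP => h.
  move: Dinf; rewrite unlock => Dinf.
  have h' : \int[P]_x `|(EFin \o D) x| `^ q < +oo.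
    apply: le_lt_trans h; rewrite le_eqVlt; apply/orP; left; apply/eqP.
    by apply: eq_integral => x _ /=; rewrite ger0_norm.
  by have := poweR_lty q^-1 h'; rewrite Dinf ltxx.
pose m (n : nat) x := Num.min (D x) n%:R.
have m0 n x : (0 <= m n x)%R by rewrite /m le_min D0 ler0n.
have mm n : measurable_fun setT (m n) by apply: measurable_minr => //; exact: measurable_cst.
pose g (n : nat) x := ((m n x) `^ q)%:E.
have mg n : measurable_fun setT (g n).
  apply/measurable_EFinP; exact: (measurableT_comp (measurable_powR q) (mm n)).
have g0 n x : setT x -> 0 <= g n x by move=> _; rewrite lee_fin powR_ge0.
have ndg x : setT x -> nondecreasing_seq (g ^~ x).
  move=> _ a b ab; rewrite lee_fin; apply: ge0_ler_powR; rewrite ?nnegrE ?m0 ?(ltW q0) //.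
  by rewrite /m; apply: le_min2 => //; rewrite ler_nat.
have h := @cvg_monotone_convergence _ _ _ P setT measurableT g mg g0 ndg.
have hlim : \int[P]_x limn (g ^~ x) = +oo.
  rewrite -Iinf; apply: eq_integral => x _.
  apply: cvg_lim => //; apply: cvg_near_cst.
  exists (Num.Def.archi_bound (D x)) => // n /= hn.
  rewrite /g /m; congr (_ `^ _)%:E; apply/min_idPl.
  apply: (le_trans (ltW (archi_boundP (D0 x)))); by rewrite ler_nat.
rewrite hlim in h.
set K := (((del `^ p)^-1) `^ ((p - 1)^-1))%R.
have h4 := cvgey_gt h K.
have [N0 _ HN] := h4.
have {HN} HK := HN N0 (leqnn N0).
set S := \int[P]_x g N0 x in HK.
have Sfin : S \is a fin_num.
  rewrite ge0_fin_numE; last by apply: integral_ge0 => x _; exact: g0.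
  apply: (@le_lt_trans _ _ (\int[P]_x (cst ((N0%:R `^ q)%R)%:E x))).
    apply: ge0_le_integral => //; try exact: mg; try exact: measurable_cst;
      try (by move=> x _; rewrite lee_fin powR_ge0).
    move=> x _; rewrite lee_fin; apply: ge0_ler_powR; rewrite ?nnegrE ?m0 ?(ltW q0) //.
    by rewrite /m ge_min lexx orbT.
  rewrite integral_cst //.
  by have e1 := probability_setT P; rewrite [X in _ * X]e1 mule1 ltry.
set s := fine S.
have K0 : (0 <= K)%R by rewrite /K powR_ge0.
have sK : (K < s)%R by rewrite -lte_fin /s fineK.
have s0 : (0 < s)%R by exact: (le_lt_trans K0 sK).
have dp0 : (0 < del `^ p)%R by rewrite powR_gt0.
set u := (s `^ (p - 1))%R.
have u0 : (0 < u)%R by rewrite powR_gt0.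
have vu : (1 < del `^ p * u)%R.
  have : ((del `^ p)^-1 < u)%R.
    have -> : ((del `^ p)^-1 = K `^ (p - 1))%R.
      by rewrite /K -powRrM mulVf ?gt_eqF // powRr1 // invr_ge0 ltW.
    rewrite /u; apply: gt0_ltr_powR; rewrite ?nnegrE ?(ltW s0) //.
  move=> hu; rewrite -(ltr_pM2l dp0) mulfV ?gt_eqF // in hu.
have Ss : S = s%:E by rewrite /s fineK.
have si0 : (0 < s^-1)%R by rewrite invr_gt0.
pose W x := (s^-1 * (m N0 x) `^ (q - 1))%R.
have W0 x : (0 <= W x)%R by rewrite /W mulr_ge0 ?powR_ge0 // ltW.
have mW : measurable_fun setT W.
  apply: measurable_funM; first exact: measurable_cst.
  exact: (measurableT_comp (measurable_powR (q - 1)) (mm N0)).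
have mq x : (m N0 x `^ (q - 1) * m N0 x = m N0 x `^ q)%R.
  rewrite -{2}(@powRr1 _ (m N0 x)) // -powRD; first by rewrite subrK.
  by rewrite subrK gt_eqF.
exists (fun x => - W x)%R; split.
- split; first exact: measurable_funN.
  rewrite unlock; case: ifPn => _; last exact: ltry.
  apply: (@le_lt_trans _ _ (s^-1 * N0%:R `^ (q - 1))%:E); last exact: ltry.
  apply/ess_supP; apply: aeW => x /=; rewrite lee_fin normrN ger0_norm //.
  rewrite ler_pM2l //; apply: ge0_ler_powR; rewrite ?nnegrE ?m0 ?(ltW qm10) //.
  by rewrite /m ge_min lexx orbT.
- have -> : Lnorm P p%:E (fun x => (0 - - W x)%:E) =
      (\int[P]_x (((s^-1) `^ p)%:E * g N0 x)) `^ p^-1.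
    rewrite unlock; congr (_ `^ _); apply: eq_integral => x _.
    rewrite /= sub0r opprK ger0_norm // -EFinM /W powRM ?powR_ge0 ?(ltW si0) //.
    by rewrite -powRrM qp.
  rewrite ge0_integralZl //; try exact: mg; try (by rewrite lee_fin powR_ge0);
    try (by move=> x _; exact: g0).
  rewrite -/S Ss -EFinM poweR_EFin lte_fin.
  rewrite -[X in (_ < X)%R](@powRr1 _ del) ?(ltW del0) // -(@mulfV _ p) ?gt_eqF //.
  rewrite powRrM; apply: gt0_ltr_powR; rewrite ?invr_gt0 ?nnegrE ?mulr_ge0 ?powR_ge0 ?(ltW s0) //.
  have sp : (s `^ p = u * s)%R.
    rewrite /u -{3}(@powRr1 _ s) ?(ltW s0) // -powRD; first by rewrite subrK.
    by rewrite subrK gt_eqF.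
  have sip : ((s^-1) `^ p = (s `^ p)^-1)%R.
    apply: (@mulIf _ (s `^ p)); first by rewrite gt_eqF // powR_gt0.
    by rewrite -powRM ?(ltW s0) ?invr_ge0 ?(ltW s0) // mulVf ?gt_eqF // powR1 mulVf ?gt_eqF ?powR_gt0.
  rewrite sip sp invfM -mulrA mulVf ?gt_eqF // mulr1.
  by rewrite -(ltr_pM2l u0) mulfV ?gt_eqF // mulrC.
- apply: (@le_trans _ _ (\int[P]_x ((s^-1)%:E * g N0 x))).
    rewrite ge0_integralZl //; try exact: mg; try (by rewrite lee_fin ltW);
      try (by move=> x _; exact: g0).
    by rewrite -/S Ss -EFinM mulVf ?gt_eqF.
  apply: ge0_le_integral => //; try (by move=> x _; rewrite mule_ge0 ?lee_fin ?powR_ge0 // ltW).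
  + apply: emeasurable_funM; [exact: measurable_cst | exact: mg].
  + apply/measurable_EFinP; apply: measurable_funN; apply: measurable_funM => //.
    exact: measurable_funN.
  + move=> x _; rewrite -EFinM lee_fin mulNr opprK /W -mulrA ler_pM2l // -mq.
    apply: ler_wpM2l; first exact: powR_ge0.
    by rewrite /m ge_min lexx.
Qed.
End Counter.

Unset Implicit Arguments. Set Strict Implicit.

Lemma rho0_le (d : measure_display) (T : measurableType d) (R : realType)
  (P : probability T R) (D : T -> R) : (rhoQ P D (fun _ : T => 0%R) <= 0)%E.
Proof.
apply: ge_ereal_sup => _ [Y _ <-].
rewrite le_eqVlt; apply/orP; left; apply/eqP.
under eq_integral do rewrite mul0r oppr0.
by rewrite integral0.
Qed.

Lemma inLp0 (d : measure_display) (T : measurableType d) (R : realType)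
  (P : probability T R) (q : \bar R) : q != 0%E -> inLp P q (fun _ : T => 0%R).
Proof.
move=> q0; split; first exact: measurable_cst.
have := Lnorm0 P q0; rewrite /cst => h.
have -> : (EFin \o fun _ : T => (0:R)) = (fun _ => 0%E) by [].
by rewrite h ltry.
Qed.

Theorem proposition7p3 (d : measure_display) (T : measurableType d) (R : realType)
  (P : probability T R) (Q : probability T R) (D : T -> R) (p : R) :
  nonatomic P -> abs_cont Q P -> is_density Q P D -> 1 <= p ->
  (inLp P (conj_exp p) D ->
     exists F : (T -> R) -> R,
       [/\ extends_rho_inf P D F, Lp_continuous P p%:E F,
           (forall X, inLp P p%:E X -> rhoQ P D X = (F X)%:E) &
           (forall G : (T -> R) -> R,
              extends_rho_inf P D G -> Lp_continuous P p%:E G ->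
              forall X, inLp P p%:E X -> G X = F X)]) /\
  (~ inLp P (conj_exp p) D ->
     ~ exists F : (T -> R) -> R,
         extends_rho_inf P D F /\ Lp_continuous P p%:E F).
Proof.
move=> _ _ [mD D0 _] p1; split.
- move=> [_ Nfin].
  have Fc := F_cont mD p1 Nfin.
  exists (fun X => fine (rhoQ P D X)); split => //.
  + by move=> X hX; rewrite fineK //; apply: (rho_fin mD p1 Nfin); exact: inLp_infty.
  + by move=> X hX; rewrite fineK //; exact: (rho_fin mD p1 Nfin).
  + move=> G GE Gc X hX.
    have key : forall e : R, 0 < e -> `|G X - fine (rhoQ P D X)| < e.
      move=> e e0.
      have e20 : 0 < e / 2 by rewrite divr_gt0.
      have [del1 del10 h1] := Gc X hX _ e20.
      have [del2 del20 h2] := Fc X hX _ e20.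
      have dm0 : 0 < Num.min del1 del2 by rewrite lt_min del10 del20.
      have [W [hW hWl]] := density p1 hX dm0.
      have hWp := inLp_infty p1 hW.
      have hW1 : (Lnorm P p%:E (fun x => (X x - W x)%:E) < del1%:E)%E.
        by apply: (lt_le_trans hWl); rewrite lee_fin ge_min lexx.
      have hW2 : (Lnorm P p%:E (fun x => (X x - W x)%:E) < del2%:E)%E.
        by apply: (lt_le_trans hWl); rewrite lee_fin ge_min lexx orbT.
      have g1 := h1 W hWp hW1.
      have g2 := h2 W hWp hW2.
      have GW : G W = fine (rhoQ P D W) by rewrite -(GE W hW).
      rewrite /= GW in g1 g2.
      move: g1 g2; rewrite !ltr_norml => /andP[a1 a2] /andP[b1 b2].
      apply/andP; split; lra.
    apply/eqP; apply/negPn/negP => hne.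
    have h0 : 0 < `|G X - fine (rhoQ P D X)| by rewrite normr_gt0 subr_eq0.
    by have := key _ h0; rewrite ltxx.
- move=> nD [F [FE Fc]].
  have Ninf : Lnorm P (conj_exp p) (EFin \o D) = +oo%E.
    apply/eqP; rewrite eq_le leey /= leNgt; apply/negP => h.
    by apply: nD; split.
  have p0 : p%:E != 0%E by rewrite eqe gt_eqF // (lt_le_trans ltr01 p1).
  have [del del0 hc] := Fc _ (@inLp0 _ _ _ P _ p0) _ ltr01.
  have [Z [hZ hZl hZi]] : exists Z, [/\ inLp P +oo%E Z,
      (Lnorm P p%:E (fun x => (0 - Z x)%:E) < del%:E)%E &
      (1 <= \int[P]_x (- (Z x * D x))%:E)%E].
    rewrite /conj_exp in Ninf; case: ifPn Ninf => [/eqP pE|pn1] Ninf.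
      subst p; have [Z' [a b c]] := counter1 mD D0 Ninf del0.
      by exists Z'; split.
    have pg1 : 1 < p by rewrite lt_neqAle eq_sym pn1 p1.
    have [Z' [a b c]] := counterq mD D0 pg1 Ninf del0.
    by exists Z'; split.
  have hZp := inLp_infty p1 hZ.
  have := hc Z hZp hZl.
  have F0 : F (fun _ => 0%R) <= 0.
    by rewrite -lee_fin (FE _ (@inLp0 _ _ _ P +oo%E erefl)) rho0_le.
  have FZ : 1 <= F Z.
    by rewrite -lee_fin (FE _ hZ); apply: le_trans hZi (rho_lb mD hZp).
  rewrite ltr_norml => /andP[a1 a2]; lra.
Qed.
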